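(* Let $c>0$ be a constant and consider the space of variables $(\rho,v,p,e,dt,dx)$, where $dt,dx$ are treated as independent variables (differentials), with $|v|<c$. Put $S=\dfrac{e+p}{c^{2}-v^{2}}$. For a real parameter $\epsilon$ (for which all expressions below are defined, in particular $\epsilon p+1\neq 0$, $\epsilon(p+Sv^{2})+1\neq 0$, $(\epsilon p+1)^2>v^2/c^2$) define the transformation $T_\epsilon:(\rho,v,p,e,dt,dx)\mapsto(\rho^{*},v^{*},p^{*},e^{*},dt^{*},dx^{*})$ by \[ \rho^{*}=\frac{\rho\sqrt{(\epsilon p+1)^{2}-v^{2}/c^{2}}}{\left(\epsilon(p+Sv^{2})+1\right)\sqrt{1-v^{2}/c^{2}}},\qquad v^{*}=\frac{v}{\epsilon p+1},\qquad p^{*}=\frac{p}{\epsilon p+1}, \] \[ e^{*}=\frac{S\left(c^{2}(\epsilon p+1)^{2}-v^{2}\right)}{\left(\epsilon(p+Sv^{2})+1\right)(\epsilon p+1)}-\frac{p}{\epsilon p+1}, \] \[ dt^{*}=-\epsilon\left(Sv\,dx-(p+Sv^{2})\,dt\right)+dt,\qquad dx^{*}=dx . \] (This is the subclass, with $a_1=-\epsilon^{-1}$, $a_2=a_4=\epsilon^{-1}$, $a_3=1$, of reciprocal transformations leaving invariant the 1+1-dimensional relativistic gasdynamic system $\partial_t\big(\rho c/\sqrt{c^2-v^2}\big)+\partial_x\big(\rho c v/\sqrt{c^2-v^2}\big)=0$, $\partial_t\big((e+p)v/(c^2-v^2)\big)+\partial_x\big((e+p)v^2/(c^2-v^2)+p\big)=0$.)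 Then the family $\{T_\epsilon\}$ is a one-parameter Lie group of transformations ($T_{\epsilon_1}\circ T_{\epsilon_2}=T_{\epsilon_1+\epsilon_2}$ where defined, $T_0=\mathrm{id}$), and, writing $S^{*}=(e^{*}+p^{*})/(c^{2}-v^{*2})$, the transformed quantities satisfy the Cauchy problem \[ \frac{d\rho^{*}}{d\epsilon}=-\frac{\rho^{*}v^{*2}e^{*}}{c^{2}-v^{*2}},\quad \frac{dv^{*}}{d\epsilon}=-p^{*}v^{*},\quad \frac{dp^{*}}{d\epsilon}=-p^{*2},\quad \frac{de^{*}}{d\epsilon}=\frac{c^{2}p^{*2}-v^{*2}e^{*2}}{c^{2}-v^{*2}}, \] \[ \frac{d(dt^{*})}{d\epsilon}=(p^{*}+S^{*}v^{*2})\,dt^{*}-S^{*}v^{*}\,dx^{*},\qquad \frac{d(dx^{*})}{d\epsilon}=0, \] with initial data $\rho^{*}=\rho,\ v^{*}=v,\ p^{*}=p,\ e^{*}=e,\ dt^{*}=dt,\ dx^{*}=dx$ at $\epsilon=0$. Equivalently, the group has infinitesimal generator \[ X=-\frac{\rho v^{2}e}{c^{2}-v^{2}}\partial_{\rho}-pv\,\partial_{v}-p^{2}\partial_{p}+\frac{c^{2}p^{2}-e^{2}v^{2}}{c^{2}-v^{2}}\partial_{e}+\frac{(c^{2}p+ev^{2})\,dt-v(e+p)\,dx}{c^{2}-v^{2}}\,\partial_{dt}. \]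
   Context: $c$ denotes the speed of light; $\rho$ is density, $v$ velocity, $p$ pressure, $e$ energy density. The differentials $dt,dx$ are regarded as additional coordinates on which the transformations act. A one-parameter Lie group of transformations is a family $T_\epsilon$ with $T_0$ the identity and $T_{\epsilon_1}\circ T_{\epsilon_2}=T_{\epsilon_1+\epsilon_2}$; its infinitesimal generator is the vector field of $\epsilon$-derivatives at $\epsilon=0$. *)

(* Defs.v *)
From Stdlib Require Import Reals.
From Coquelicot Require Import Coquelicot.
Open Scope R_scope.

(* A point (rho, v, p, e, dt, dx) of the extended space; dt, dx are the
   differentials, treated as independent coordinates. *)
Record state := mkState {
  rho : R; vel : R; pr : R; en : R; dt : R; dx : R }.

Definition Sfun (c : R) (s : state) : R :=
  (en s + pr s) / (c ^ 2 - vel s ^ 2).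

Definition Tdef (c eps : R) (s : state) : Prop :=
  Rabs (vel s) < c /\
  eps * pr s + 1 <> 0 /\
  eps * (pr s + Sfun c s * vel s ^ 2) + 1 <> 0 /\
  (eps * pr s + 1) ^ 2 > vel s ^ 2 / c ^ 2.

Definition T (c eps : R) (s : state) : state :=
  let v := vel s in let p := pr s in let S := Sfun c s in
  let a := eps * p + 1 in
  let b := eps * (p + S * v ^ 2) + 1 in
  mkState
    (rho s * sqrt (a ^ 2 - v ^ 2 / c ^ 2) / (b * sqrt (1 - v ^ 2 / c ^ 2)))
    (v / a)
    (p / a)
    (S * (c ^ 2 * a ^ 2 - v ^ 2) / (b * a) - p / a)
    (- eps * (S * v * dx s - (p + S * v ^ 2) * dt s) + dt s)
    (dx s).

(* Main.v *)
Require Import Defs.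
From Stdlib Require Import Reals Lra Psatz.
From Coquelicot Require Import Coquelicot.
Open Scope R_scope.

Lemma c2v2 c v : 0 < c -> Rabs v < c -> c^2 - v^2 > 0.
Proof. intros hc hv. rewrite <- (pow2_abs v). pose proof (Rabs_pos v). nra. Qed.

Lemma one_v2 c v : 0 < c -> Rabs v < c -> 1 - v^2/c^2 > 0.
Proof. intros hc hv. pose proof (c2v2 c v hc hv).
  replace (1 - v^2/c^2) with ((c^2-v^2)/c^2) by (field; lra).
  apply Rdiv_lt_0_compat; nra. Qed.

Lemma part1 c (hc : 0 < c) : forall s : state, Rabs (vel s) < c -> T c 0 s = s.
Proof.
  intros [r v p e t x] hv; simpl in hv.
  pose proof (c2v2 c v hc hv). pose proof (one_v2 c v hc hv).
  assert (sqrt (1 - v^2/c^2) > 0) by (apply sqrt_lt_R0; lra).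
  unfold T, Sfun; cbv beta zeta; cbn [rho vel pr en dt dx]. f_equal.
  - replace ((0 * p + 1) ^ 2 - v ^ 2 / c ^ 2) with (1 - v^2/c^2) by ring. field. lra.
  - field.
  - field.
  - field. lra.
  - ring.
Qed.

Lemma part2 c (hc : 0 < c) : forall (e1 e2 : R) (s : state),
      Tdef c e2 s -> Tdef c e1 (T c e2 s) -> Tdef c (e1 + e2) s ->
      T c e1 (T c e2 s) = T c (e1 + e2) s.
Proof.
  intros e1 e2 [r v p e t x] H2 H12 H3.
  unfold Tdef, T, Sfun in *; cbv beta zeta in *; cbn [rho vel pr en dt dx] in *.
  destruct H2 as [hv [ha [hb hav]]].
  destruct H3 as [_ [hA [hB hAv]]].
  destruct H12 as [hv2 [ha2 [hb2 hav2]]].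
  pose proof (c2v2 c v hc hv). pose proof (one_v2 c v hc hv).
  set (S := (e+p)/(c^2-v^2)) in *.
  set (a := e2*p+1) in *.
  set (b := e2*(p+S*v^2)+1) in *.
  assert (hca : c^2*a^2 - v^2 > 0).
  { apply Rmult_gt_compat_r with (r := c^2) in hav; [|nra].
    replace (v^2/c^2*c^2) with (v^2) in hav by (field; lra). lra. }
  assert (HS2 : (S*(c^2*a^2-v^2)/(b*a) - p/a + p/a)/(c^2-(v/a)^2) = S*a/b).
  { field. repeat split; try lra. }
  rewrite HS2 in *.
  set (A := (e1+e2)*p+1) in *.
  set (B := (e1+e2)*(p+S*v^2)+1) in *.
  assert (HA : e1*(p/a)+1 = A/a) by (unfold A, a in *; field; auto).
  assert (HB : e1*(p/a + S*a/b*(v/a)^2)+1 = B/b) by (unfold A, B, a, b in *; field; auto).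
  rewrite HA, HB in *.
  f_equal.
  - assert (E1 : (A / a) ^ 2 - (v / a) ^ 2 / c ^ 2 = (A^2 - v^2/c^2)/a^2) by (field; lra).
    assert (E2 : 1 - (v / a) ^ 2 / c ^ 2 = (a^2 - v^2/c^2)/a^2) by (field; lra).
    assert (a^2 > 0) by (rewrite <- Rsqr_pow2; apply Rsqr_pos_lt; auto).
    rewrite E1, E2, !sqrt_div_alt by lra.
    assert (sqrt (a^2) > 0) by (apply sqrt_lt_R0; lra).
    assert (sqrt (a^2 - v^2/c^2) > 0) by (apply sqrt_lt_R0; lra).
    assert (sqrt (1 - v^2/c^2) > 0) by (apply sqrt_lt_R0; lra).
    field. repeat split; lra.
  - unfold A, a in *; field; auto.
  - unfold A, a in *; field; auto.
  - field. auto.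
  - unfold b, a in *. field. auto.
Qed.

Lemma der_rho (r p q k K0 eps : R): 0 < (eps*p+1)^2 - k -> eps*q+1 <> 0 -> K0 <> 0 ->
 is_derive (fun e => r * sqrt((e*p+1)^2 - k) / ((e*q+1)*K0)) eps
   (r * sqrt((eps*p+1)^2-k)/((eps*q+1)*K0) * ((eps*p+1)*p/((eps*p+1)^2-k) - q/(eps*q+1))).
Proof.
  intros hX hb hK. auto_derive.
  { split. { ring_simplify; ring_simplify in hX; lra. } split; auto.
 }
  - replace ((eps*p+1)*((eps*p+1)*1) + -k) with ((eps*p+1)^2-k) by ring.
  assert (hQ : 0 < sqrt ((eps*p+1)^2-k)) by (apply sqrt_lt_R0; auto).
    pose proof (sqrt_sqrt ((eps*p+1)^2-k) (Rlt_le _ _ hX)) as HX.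
    set (Q := sqrt ((eps*p+1)^2-k)) in *.
    rewrite <- HX. field. repeat split; lra.
Qed.

Lemma is_derive_eq (f : R -> R) (x l l' : R) : is_derive f x l -> l = l' -> is_derive f x l'.
Proof. intros H ->; exact H. Qed.

Lemma part3 c (hc : 0 < c) : forall (s : state) (eps : R), Tdef c eps s ->
      let s' := T c eps s in
      let S' := (en s' + pr s') / (c ^ 2 - vel s' ^ 2) in
      is_derive (fun e => rho (T c e s)) eps
        (- (rho s' * vel s' ^ 2 * en s') / (c ^ 2 - vel s' ^ 2)) /\
      is_derive (fun e => vel (T c e s)) eps (- (pr s' * vel s')) /\
      is_derive (fun e => pr (T c e s)) eps (- (pr s' ^ 2)) /\
      is_derive (fun e => en (T c e s)) eps
        ((c ^ 2 * pr s' ^ 2 - vel s' ^ 2 * en s' ^ 2) / (c ^ 2 - vel s' ^ 2)) /\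
      is_derive (fun e => dt (T c e s)) eps
        ((pr s' + S' * vel s' ^ 2) * dt s' - S' * vel s' * dx s') /\
      is_derive (fun e => dx (T c e s)) eps 0.
Proof.
  intros [r v p e t x] eps H2 s' S'. subst s' S'.
  unfold Tdef, T, Sfun in *; cbv beta zeta in *; cbn [rho vel pr en dt dx] in *.
  destruct H2 as [hv [ha [hb hav]]].
  pose proof (c2v2 c v hc hv). pose proof (one_v2 c v hc hv).
  set (S := (e+p)/(c^2-v^2)) in *.
  assert (hca : c^2*(eps*p+1)^2 - v^2 > 0).
  { apply Rmult_gt_compat_r with (r := c^2) in hav; [|nra].
    replace (v^2/c^2*c^2) with (v^2) in hav by (field; lra). lra. }
  assert (hca' : (c*(eps*p+1))^2 - v^2 > 0) by (rewrite Rpow_mult_distr; lra).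
  assert (hQ : 0 < sqrt ((eps*p+1)^2 - v^2/c^2)) by (apply sqrt_lt_R0; lra).
  assert (hK : 0 < sqrt (1 - v^2/c^2)) by (apply sqrt_lt_R0; lra).
  split; [|split; [|split; [|split; [|split]]]].
  { eapply is_derive_eq.
    { apply (der_rho r p (p + S*v^2) (v^2/c^2) (sqrt (1 - v^2/c^2)) eps); lra. }
    set (Q := sqrt ((eps*p+1)^2 - v^2/c^2)) in *.
    set (K := sqrt (1 - v^2/c^2)) in *.
    field. repeat split; lra. }
  all: auto_derive; [ try (repeat split; auto) | ].
  all: try field; repeat split; try lra.
Qed.

Lemma part4 c (hc : 0 < c) : forall s : state, Rabs (vel s) < c ->
      is_derive (fun e => rho (T c e s)) 0
        (- (rho s * vel s ^ 2 * en s) / (c ^ 2 - vel s ^ 2)) /\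
      is_derive (fun e => vel (T c e s)) 0 (- (pr s * vel s)) /\
      is_derive (fun e => pr (T c e s)) 0 (- (pr s ^ 2)) /\
      is_derive (fun e => en (T c e s)) 0
        ((c ^ 2 * pr s ^ 2 - en s ^ 2 * vel s ^ 2) / (c ^ 2 - vel s ^ 2)) /\
      is_derive (fun e => dt (T c e s)) 0
        (((c ^ 2 * pr s + en s * vel s ^ 2) * dt s - vel s * (en s + pr s) * dx s)
           / (c ^ 2 - vel s ^ 2)) /\
      is_derive (fun e => dx (T c e s)) 0 0.
Proof.
  intros s hv.
  assert (hT : Tdef c 0 s).
  { pose proof (one_v2 c (vel s) hc hv).
    unfold Tdef; repeat split; auto; try (rewrite Rmult_0_l, Rplus_0_l; lra).
    }
  pose proof (part3 c hc s 0 hT) as P. cbv zeta in P.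
  rewrite (part1 c hc s hv) in P.
  pose proof (c2v2 c (vel s) hc hv).
  destruct P as [P1 [P2 [P3 [P4 [P5 P6]]]]].
  split; [exact P1|split; [exact P2|split; [exact P3|split; [|split; [|exact P6]]]]].
  { eapply is_derive_eq; [exact P4|]. field. lra. }
  { eapply is_derive_eq; [exact P5|]. field. lra. }
Qed.

Theorem mainTheorem1 (c : R) (hc : 0 < c) :
  (* T_0 = id *)
  (forall s : state, Rabs (vel s) < c -> T c 0 s = s) /\
  (* group law, where defined *)
  (forall (e1 e2 : R) (s : state),
      Tdef c e2 s -> Tdef c e1 (T c e2 s) -> Tdef c (e1 + e2) s ->
      T c e1 (T c e2 s) = T c (e1 + e2) s) /\
  (* the Cauchy problem (initial data given by T_0 = id above) *)
  (forall (s : state) (eps : R), Tdef c eps s ->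
      let s' := T c eps s in
      let S' := (en s' + pr s') / (c ^ 2 - vel s' ^ 2) in
      is_derive (fun e => rho (T c e s)) eps
        (- (rho s' * vel s' ^ 2 * en s') / (c ^ 2 - vel s' ^ 2)) /\
      is_derive (fun e => vel (T c e s)) eps (- (pr s' * vel s')) /\
      is_derive (fun e => pr (T c e s)) eps (- (pr s' ^ 2)) /\
      is_derive (fun e => en (T c e s)) eps
        ((c ^ 2 * pr s' ^ 2 - vel s' ^ 2 * en s' ^ 2) / (c ^ 2 - vel s' ^ 2)) /\
      is_derive (fun e => dt (T c e s)) eps
        ((pr s' + S' * vel s' ^ 2) * dt s' - S' * vel s' * dx s') /\
      is_derive (fun e => dx (T c e s)) eps 0) /\
  (* infinitesimal generator X *)
  (forall s : state, Rabs (vel s) < c ->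
      is_derive (fun e => rho (T c e s)) 0
        (- (rho s * vel s ^ 2 * en s) / (c ^ 2 - vel s ^ 2)) /\
      is_derive (fun e => vel (T c e s)) 0 (- (pr s * vel s)) /\
      is_derive (fun e => pr (T c e s)) 0 (- (pr s ^ 2)) /\
      is_derive (fun e => en (T c e s)) 0
        ((c ^ 2 * pr s ^ 2 - en s ^ 2 * vel s ^ 2) / (c ^ 2 - vel s ^ 2)) /\
      is_derive (fun e => dt (T c e s)) 0
        (((c ^ 2 * pr s + en s * vel s ^ 2) * dt s - vel s * (en s + pr s) * dx s)
           / (c ^ 2 - vel s ^ 2)) /\
      is_derive (fun e => dx (T c e s)) 0 0).
Proof.
  split; [exact (part1 c hc)|split; [exact (part2 c hc)|split; [exact (part3 c hc)|exact (part4 c hc)]]].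
Qed.
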